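(* Assume the setting below. For all $k\in\mathbb{N}$ and all integers $i\ge e-1$, $\mu_{k,i}=\mu_{k,i+1}$.
   Context: Let $K$ be a difference field of characteristic $0$, i.e. a field of characteristic $0$ with a field endomorphism $\sigma$. Let $\mathcal{Y}=\{y_1,\ldots,y_n\}$ be difference indeterminates and $K\{\mathcal{Y}\}$ the difference polynomial ring: the polynomial ring over $K$ in the variables $y_j^{(l)}$ ($1\le j\le n$, $l\in\mathbb{N}$), with $\sigma(y_j^{(l)})=y_j^{(l+1)}$. For $f\in K\{\mathcal{Y}\}$ write $f^{(j)}=\sigma^j(f)$. A $\sigma$-ideal is an ideal stable under $\sigma$; it is reflexive if $\sigma(a)\in I$ implies $a\in I$, and $\sigma$-prime if reflexive and prime. Let $\mathcal{Y}^{(k)}=\{y_1^{(k)},\dots,y_n^{(k)}\}$. Let $F=\{f_1,\ldots,f_r\}\subset K\{\mathcal{Y}\}$, $F^{(j)}=\{f_1^{(j)},\dots,f_r^{(j)}\}$, and let $e\ge1$ be the maximal $l$ such that some $y_j^{(l)}$ occurs in $F$. Let $\mathfrak{p}$ be a $\sigma$-prime ideal of $K\{\mathcal{Y}\}$ minimal over the $\sigma$-ideal $[F]$, and let $\kappa$ be the residue field of $\mathfrak{p}$ (the fraction field of $K\{\mathcal{Y}\}/\mathfrak{p}$). For $k\ge1$ and $i\ge e-1$, let $J_{k,i}$ be the $kr\times kn$ matrix $\partial(F^{(i-e+1)},\ldots,F^{(i-e+k)})/\partial(\mathcal{Y}^{(i+1)},\ldots,\mathcal{Y}^{(i+k)})$,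 i.e. its $(a,b)$ block ($1\le a,b\le k$) is the $r\times n$ matrix $(\partial f_l^{(i-e+a)}/\partial y_j^{(i+b)})_{l,j}$. Define $\mu_{0,i}:=0$ and, for $k\ge1$, $\mu_{k,i}:=\dim_\kappa\ker(J_{k,i}^{\tau})=kr-\operatorname{rank}_\kappa(J_{k,i})$, where $J_{k,i}^\tau$ is the transpose and $J_{k,i}$ is considered over $\kappa$ via the images of its entries. *)

(* Defs.v *)
From HB Require Import structures.
From mathcomp Require Import all_boot all_algebra.
From mathcomp Require Import finmap.
From mathcomp.multinomials Require Export monalg.

Set Implicit Arguments.
Unset Strict Implicit.
Unset Printing Implicit Defensive.

Import GRing.Theory.
Local Open Scope ring_scope.

(* The difference polynomial ring K{Y} in the difference indeterminates
   y_1..y_n : the polynomial ring over K in the variables y_j^(l),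
   indexed here by pairs (l, j) with l : nat and j : 'I_n. *)
Definition dvar (n : nat) : choiceType := (nat * 'I_n)%type.

Definition dpoly (K : fieldType) (n : nat) := {malg K[{cmonom (dvar n)}]}.

Definition yv (K : fieldType) (n : nat) (l : nat) (j : 'I_n) : dpoly K n :=
  << ucm ((l, j) : dvar n) >>.

(* the extension of sigma to K{Y}: coefficients are mapped by sigma and
   y_j^(l) is mapped to y_j^(l+1) *)
Definition dsigma (K : fieldType) (n : nat) (sK : K -> K) (f : dpoly K n)
  : dpoly K n :=
  mmap (fun c : K => (sK c)%:MP)
       (fun m : {cmonom (dvar n)} =>
          \prod_(v <- finsupp m) yv K v.1.+1 v.2 ^+ (m v)) f.

Definition dderiv (K : fieldType) (n : nat) (v : dvar n) (f : dpoly K n)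
  : dpoly K n :=
  \sum_(m <- msupp f) << ((m v)%:R * f@_m) *g divcm m (ucm v) >>.

Definition occurs (K : fieldType) (n : nat) (l : nat) (j : 'I_n)
  (f : dpoly K n) : Prop :=
  exists2 m, m \in msupp f & (0 < m ((l, j) : dvar n))%N.

Definition is_ideal (A : comNzRingType) (I : A -> Prop) : Prop :=
  [/\ I 0, (forall a b, I a -> I b -> I (a + b)) & (forall a b, I b -> I (a * b))].

Definition sigma_ideal (A : comNzRingType) (s : A -> A) (I : A -> Prop) : Prop :=
  is_ideal I /\ (forall a, I a -> I (s a)).

Definition reflexive_ideal (A : comNzRingType) (s : A -> A) (I : A -> Prop) : Prop :=
  forall a, I (s a) -> I a.

Definition prime_ideal (A : comNzRingType) (I : A -> Prop) : Prop :=
  [/\ is_ideal I, ~ I 1 & (forall a b, I (a * b) -> I a \/ I b)].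

Definition sigma_prime (A : comNzRingType) (s : A -> A) (I : A -> Prop) : Prop :=
  [/\ sigma_ideal s I, reflexive_ideal s I & prime_ideal I].

Definition sigma_gen (A : comNzRingType) (s : A -> A) (S : A -> Prop) (a : A)
  : Prop :=
  forall I, sigma_ideal s I -> (forall x, S x -> I x) -> I a.

Definition minimal_sigma_prime_over (A : comNzRingType) (s : A -> A)
  (S : A -> Prop) (p : A -> Prop) : Prop :=
  [/\ sigma_prime s p,
      (forall a, sigma_gen s S a -> p a) &
      (forall q, sigma_prime s q -> (forall a, sigma_gen s S a -> q a) ->
         (forall a, q a -> p a) -> forall a, p a -> q a)].

(* (L, phi) is (a copy of) the residue field of p: the fraction field of A/p *)
Definition residue_field_of (A : comNzRingType) (p : A -> Prop)
  (L : fieldType) (phi : A -> L) : Prop :=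
  (forall a, phi a = 0 <-> p a) /\
  (forall x : L, exists a b, phi b != 0 /\ x = phi a / phi b).

(* decoding an index of 'I_(m * n) as a pair (block index, inner index) *)
Definition unpair (m n : nat) (p : 'I_(m * n)) : 'I_m * 'I_n :=
  enum_val (cast_ord (esym (@mxvec_cast m n)) p).

(* J_{k,i} = d(F^(i-e+1),...,F^(i-e+k)) / d(Y^(i+1),...,Y^(i+k)),
   a (k r) x (k n) matrix; block (a,b) (0-based) is
   (d f_l^(i-e+1+a) / d y_j^(i+1+b))_{l,j}. *)
Definition jacobian (K : fieldType) (n r : nat) (sK : K -> K)
  (F : 'I_r -> dpoly K n) (e k i : nat) : 'M[dpoly K n]_(k * r, k * n) :=
  \matrix_(p < k * r, q < k * n)
    dderiv ((i + 1 + (unpair q).1)%N, (unpair q).2)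
           (iter (i + 1 - e + (unpair p).1) (dsigma sK) (F (unpair p).2)).

Definition mu (K : fieldType) (n r : nat) (sK : K -> K)
  (F : 'I_r -> dpoly K n) (e : nat) (L : fieldType) (phi : dpoly K n -> L)
  (k i : nat) : nat :=
  (k * r - \rank (map_mx phi (jacobian sK F e k i)))%N.

(* Main.v *)
Require Import Defs.
From HB Require Import structures.
From mathcomp Require Import all_boot all_algebra finmap.
From mathcomp Require Import ring.
From mathcomp.multinomials Require Import monalg.
Local Open Scope ring_scope.
Set Implicit Arguments. Unset Strict Implicit.
Import GRing.Theory.
Open Scope fset_scope.

Section Shift.
Variable n : nat.
Local Notation V := (dvar n).
Local Notation M := {cmonom V}.

Definition cpow (x : M) k : M := \big[mmul/mone]_(i < k) x.
Definition shv (v : V) : V := (v.1.+1, v.2).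
Definition shiftm (m : M) : M := \big[mmul/mone]_(v <- finsupp m) cpow (ucm (shv v)) (m v).

Lemma cpowE x k w : cpow x k w = (k * x w)%N.
Proof.
rewrite /cpow; elim: k => [|k IH]; first by rewrite big_ord0 cm1.
by rewrite big_ord_recl cmM IH mulSn.
Qed.

Lemma cm_big (I : Type) (s : seq I) (F : I -> M) w :
  (\big[mmul/mone]_(i <- s) F i) w = (\sum_(i <- s) F i w)%N.
Proof.
elim: s => [|a s IH]; first by rewrite !big_nil cm1.
by rewrite !big_cons cmM IH.
Qed.

Lemma shiftmE m w : shiftm m w = if w.1 is l.+1 then m (l, w.2) else 0%N.
Proof.
rewrite /shiftm cm_big.
under eq_bigr do rewrite cpowE cmU.
case: w => [[|l] j] /=.
  by rewrite big1 // => -[a b] _; rewrite /shv /= muln0.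
case: (finsuppP m (l, j)) => H.
  rewrite big1_seq // => -[a b] /= vin; rewrite /shv /=.
  case E: ((a.+1, b) == (l.+1, j)); last by rewrite muln0.
  by move/eqP: E => [ea eb]; subst; rewrite vin in H.
rewrite (big_fsetD1 (l, j)) //= /shv /= eqxx muln1 big1_fset ?addn0 //.
move=> [a b] /=; rewrite in_fsetD1 => /andP[ne _] _.
case E: ((a.+1, b) == (l.+1, j)); last by rewrite muln0.
by move/eqP: E => [ea eb]; subst; rewrite eqxx in ne.
Qed.

Lemma shiftm1 : shiftm mone = mone.
Proof. apply/eqP/cmP => w; rewrite shiftmE; case: w => [[|l] j] /=; by rewrite ?cm1. Qed.

Lemma shiftmM m1 m2 : shiftm (mmul m1 m2) = mmul (shiftm m1) (shiftm m2).
Proof. apply/eqP/cmP => w; rewrite !cmM !shiftmE; case: w => [[|l] j] /=; by rewrite ?cmM. Qed.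

Lemma shiftm_div m v : shiftm (divcm m (ucm v)) = divcm (shiftm m) (ucm (shv v)).
Proof.
apply/eqP/cmP => w; rewrite !divcmE !shiftmE !cmU; case: w => [[|l] j] /=; rewrite ?divcmE ?cmU //; case: v => a b; rewrite /shv /=.
Qed.
End Shift.

Lemma mmap_sum (Kc : choiceType) (G : zmodType) (S : ringType) (f : {additive G -> S}) (h : Kc -> S) (I : Type) (s : seq I) (F : I -> {malg G[Kc]}) :
  mmap f h (\sum_(i <- s) F i) = \sum_(i <- s) mmap f h (F i).
Proof. exact: raddf_sum. Qed.

Lemma ext_add (Kc : choiceType) (G : zmodType) (Z : zmodType)
  (Phi Psi : {additive {malg G[Kc]} -> Z}) :
  (forall c m, Phi << c *g m >> = Psi << c *g m >>) -> forall g, Phi g = Psi g.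
Proof.
move=> H g; rewrite (monalgE g) !raddf_sum; apply: eq_bigr => m _; exact: H.
Qed.

Section Malg.
Variable (K : fieldType) (n : nat).
Local Notation V := (dvar n).
Local Notation M := {cmonom V}.
Local Notation P := (dpoly K n).

Lemma mulUU (a b : K) (k1 k2 : M) :
  (<< a *g k1 >> : P) * << b *g k2 >> = << a * b *g mmul k1 k2 >>.
Proof. rewrite malgM_def; exact: fgmulUU. Qed.

Lemma m1k (k : M) : mmul mone k = k.
Proof. exact: mul1m. Qed.
Lemma mk1 (k : M) : mmul k mone = k.
Proof. exact: mulm1. Qed.

Lemma CU (c a : K) (k : M) : (c%:MP : P) * << a *g k >> = << c * a *g k >>.
Proof. by rewrite (mulUU c a mone k) m1k. Qed.
Lemma yv_exp l j k : yv K (l : nat) (j : 'I_n) ^+ k = << cpow (ucm ((l, j) : V)) k >>.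
Proof.
elim: k => [|k IH]; first by rewrite expr0 /cpow big_ord0.
rewrite exprS IH /yv mulUU mul1r /cpow big_ord_recl.
reflexivity.
Qed.
Lemma prod_shift (m : M) :
  \prod_(v <- finsupp m) yv K v.1.+1 v.2 ^+ (m v) = (<< shiftm m >> : P).
Proof.
rewrite /shiftm; elim: (finsupp m : seq V) => [|v s IH].
  rewrite !big_nil. reflexivity.
rewrite !big_cons IH. case: v => a b. rewrite yv_exp mulUU mul1r. reflexivity.
Qed.

Variable sK : {rmorphism K -> K}.

Definition fs : K -> P := fun c => (sK c)%:MP.
Definition hs : M -> P := fun m => << shiftm m >>.

Lemma fs_add : additive fs.
Proof. by move=> a b; rewrite /fs rmorphB monalgUB. Qed.
HB.instance Definition _ := GRing.isAdditive.Build K P fs fs_add.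
Lemma fs_mul : GRing.multiplicative fs.
Proof.
split; last by rewrite /fs rmorph1.
by move=> a b; rewrite /fs rmorphM CU.
Qed.
HB.instance Definition _ := GRing.isMultiplicative.Build K P fs fs_mul.

Lemma hs_mul : mmorphism hs.
Proof.
split; last by rewrite /hs shiftm1.
by move=> a b; rewrite /hs shiftmM mulUU mul1r.
Qed.
HB.instance Definition _ := isMultiplicative.Build M P hs hs_mul.

Lemma dsigmaE f : dsigma sK f = mmap fs hs f.
Proof.
rewrite /dsigma !mmapE; apply: eq_bigr => m _.
by rewrite prod_shift.
Qed.
Implicit Types (f g : P).
Lemma dsB f g : dsigma sK (f - g) = dsigma sK f - dsigma sK g.
Proof. by rewrite !dsigmaE raddfB. Qed.
Lemma dsM f g : dsigma sK (f * g) = dsigma sK f * dsigma sK g.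
Proof. by rewrite !dsigmaE rmorphM. Qed.
Lemma ds1 : dsigma sK (1 : P) = 1.
Proof. by rewrite !dsigmaE rmorph1. Qed.

Definition hd (v : V) : M -> P := fun m => << (m v)%:R *g divcm m (ucm v) >>.

Definition cP : K -> P := fun c => c%:MP.
Lemma cP_add : additive cP.
Proof. by move=> a b; rewrite /cP monalgUB. Qed.
HB.instance Definition _ := GRing.isAdditive.Build K P cP cP_add.

Lemma dderivE v f : dderiv v f = mmap cP (hd v) f.
Proof.
rewrite /dderiv mmapE; apply: eq_bigr => m _.
by rewrite /hd CU mulrC.
Qed.

Lemma UE (x y : K) (k1 k2 : M) : x = y -> k1 = k2 -> (<< x *g k1>> : P) = << y *g k2 >>.
Proof. by move=> -> ->. Qed.

Lemma ddB v f g : dderiv v (f - g) = dderiv v f - dderiv v g.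
Proof. by rewrite !dderivE raddfB. Qed.

Lemma dsU (c : K) (m : M) : dsigma sK << c *g m >> = << sK c *g shiftm m >>.
Proof. by rewrite dsigmaE mmapU /fs /hs CU mulr1. Qed.
Lemma ddU v (c : K) (m : M) : dderiv v << c *g m >> = << c * (m v)%:R *g divcm m (ucm v) >>.
Proof. by rewrite dderivE mmapU /cP /hd CU. Qed.

Definition Phi1 w : P -> P := fun f => dderiv (shv w) (dsigma sK f).
Definition Phi2 w : P -> P := fun f => dsigma sK (dderiv w f).
Lemma Phi1_add w : additive (Phi1 w).
Proof. by move=> f g; rewrite /Phi1 dsB ddB. Qed.
Lemma Phi2_add w : additive (Phi2 w).
Proof. by move=> f g; rewrite /Phi2 ddB dsB. Qed.
HB.instance Definition _ w := GRing.isAdditive.Build P P (Phi1 w) (Phi1_add w).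
HB.instance Definition _ w := GRing.isAdditive.Build P P (Phi2 w) (Phi2_add w).

Lemma dd_ds w f : dderiv (shv w) (dsigma sK f) = dsigma sK (dderiv w f).
Proof.
have H : forall c m, Phi1 w << c *g m >> = Phi2 w << c *g m >>.
  move=> c m; rewrite /Phi1 /Phi2 dsU ddU ddU dsU.
  apply: UE; last exact: (esym (shiftm_div m w)).
  rewrite shiftmE; case: w => a b /=.
  by rewrite rmorphM rmorph_nat.
exact: (@ext_add _ _ _ (Phi1 w) (Phi2 w) H f).
Qed.
End Malg.
Section Tau.
Variables (A : comNzRingType) (L : fieldType) (s : A -> A) (phi : {rmorphism A -> L}).
Hypothesis sB : forall a b, s (a - b) = s a - s b.
Hypothesis sM : forall a b, s (a * b) = s a * s b.
Hypothesis s1 : s 1 = 1.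
Hypothesis s0 : forall a, phi a = 0 -> phi (s a) = 0.
Hypothesis sr : forall a, phi (s a) = 0 -> phi a = 0.
Hypothesis rep : forall x : L, exists a b, phi b != 0 /\ x = phi a / phi b.

Lemma exP (x : L) : exists ab : A * A, (phi ab.2 != 0) && (x == phi ab.1 / phi ab.2).
Proof. by case: (rep x) => a [b [nz ->]]; exists (a, b); rewrite nz eqxx. Qed.

Definition tau (x : L) : L :=
  let ab := xchoose (exP x) in phi (s ab.1) / phi (s ab.2).

Lemma snz b : phi b != 0 -> phi (s b) != 0.
Proof. by move=> nz; apply/eqP => /sr; apply/eqP. Qed.

Lemma tauE a b : phi b != 0 -> tau (phi a / phi b) = phi (s a) / phi (s b).
Proof.
move=> nzb; rewrite /tau.
have /andP[nz0 /eqP E] := xchooseP (exP (phi a / phi b)).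
move: (xchoose _) nz0 E => [a0 b0] /= nz0 E.
have E2 : phi a * phi b0 = phi a0 * phi b.
  rewrite -(divfK nzb (phi a)) E; field; exact: nz0.
have E1 : phi (a * b0 - a0 * b) = 0.
  by rewrite rmorphB !rmorphM /= E2 subrr.
move/s0: E1; rewrite sB !sM rmorphB !rmorphM /= => /eqP; rewrite subr_eq0 => /eqP E3.
have nzsb := snz nzb; have nzsb0 := snz nz0.
apply: (mulIf nzsb); rewrite divfK //.
apply: (mulIf nzsb0); rewrite E3; field; exact: nzsb0.
Qed.

Lemma tau_phi a : tau (phi a) = phi (s a).
Proof.
have := @tauE a 1; rewrite !rmorph1 s1 rmorph1 !divr1; apply; exact: oner_neq0.
Qed.

Lemma tau_add : additive tau.
Proof.
move=> x y.
case: (rep x) => a [b [nzb ->]]; case: (rep y) => c [d [nzd ->]].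
have nzbd : phi (b * d) != 0 by rewrite rmorphM mulf_neq0.
have -> : phi a / phi b - phi c / phi d = phi (a * d - c * b) / phi (b * d).
  rewrite rmorphB !rmorphM /=; field; apply/andP; split => //.
rewrite !tauE // sB !sM rmorphB !rmorphM /=.
have := snz nzb; have := snz nzd => h1 h2.
field; apply/andP; split => //.
Qed.
HB.instance Definition _ := GRing.isAdditive.Build L L tau tau_add.

Lemma tau_mul : GRing.multiplicative tau.
Proof.
split; last by rewrite -(rmorph1 phi) tau_phi s1 rmorph1.
move=> x y.
case: (rep x) => a [b [nzb ->]]; case: (rep y) => c [d [nzd ->]].
have nzbd : phi (b * d) != 0 by rewrite rmorphM mulf_neq0.
have -> : phi a / phi b * (phi c / phi d) = phi (a * c) / phi (b * d).
  rewrite !rmorphM /=; field; apply/andP; split => //.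
rewrite !tauE // !sM !rmorphM /=.
have := snz nzb; have := snz nzd => h1 h2.
field; apply/andP; split => //.
Qed.
HB.instance Definition _ := GRing.isMultiplicative.Build L L tau tau_mul.

Lemma rank_s m n (J : 'M[A]_(m, n)) : \rank (map_mx phi (map_mx s J)) = \rank (map_mx phi J).
Proof.
have -> : map_mx phi (map_mx s J) = map_mx tau (map_mx phi J).
  by apply/matrixP => i j; rewrite !mxE tau_phi.
exact: mxrank_map.
Qed.
End Tau.
Lemma jac_succ (K : fieldType) (n r : nat) (sK : {rmorphism K -> K})
  (F : 'I_r -> dpoly K n) (e k i : nat) : (e <= i.+1)%N ->
  jacobian sK F e k i.+1 = map_mx (dsigma sK) (jacobian sK F e k i).
Proof.
move=> hei; apply/matrixP => p q; rewrite !mxE.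
have -> : (i.+1 + 1 - e + (unpair p).1 = (i + 1 - e + (unpair p).1).+1)%N.
  by rewrite addn1 subSn // addn1.
rewrite iterS -dd_ds /shv /=.
by rewrite !addn1 addSn.
Qed.
Unset Implicit Arguments.
Close Scope fset_scope.

Theorem mainTheorem4
  (K : fieldType) (charK0 : [pchar K] =i pred0)
  (sK : {rmorphism K -> K})
  (n r : nat) (F : 'I_r -> dpoly K n) (e : nat)
  (e_ge1 : (1 <= e)%N)
  (e_occ : exists t j, occurs e j (F t))
  (e_max : forall t l j, occurs l j (F t) -> (l <= e)%N)
  (p : dpoly K n -> Prop)
  (p_min : minimal_sigma_prime_over (dsigma sK)
             (fun f => exists t, f = F t) p)
  (L : fieldType) (phi : {rmorphism dpoly K n -> L})
  (kappa : residue_field_of p phi) :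
  forall k i : nat, (e.-1 <= i)%N ->
    mu sK F e phi k i = mu sK F e phi k i.+1.
Proof.
move=> k i hi.
have hei : (e <= i.+1)%N by rewrite -(prednK e_ge1) ltnS.
case: p_min => [[[_ sig] refl _] _ _].
case: kappa => kz krep.
rewrite /mu jac_succ //.
congr (_ - _)%N.
symmetry; apply: rank_s => //.
- exact: dsB.
- exact: dsM.
- exact: ds1.
- by move=> a /kz /sig /kz.
- by move=> a /kz /refl /kz.
Qed.
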